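(* Let $G$ be a metabelian group (i.e. $G''=1$) with $G/G'\cong\mathbb{Z}$, and let $a,b\in G$ be such that the abelianization map $G\to G/G'$ sends $a$ and $b$ to the same generator of $\mathbb{Z}$. Then $a$ is conjugate to $b$ in $G$. *)

(* Defs.v *)
From Stdlib Require Import ZArith.
Open Scope Z_scope.

Set Implicit Arguments.

Record is_group (G : Type) (mul : G -> G -> G) (e : G) (inv : G -> G) : Prop := {
  grp_assoc : forall x y z, mul x (mul y z) = mul (mul x y) z;
  grp_mul1g : forall x, mul e x = x;
  grp_mulg1 : forall x, mul x e = x;
  grp_mulVg : forall x, mul (inv x) x = e;
  grp_mulgV : forall x, mul x (inv x) = e
}.

Section GroupDefs.
Variables (G : Type) (mul : G -> G -> G) (e : G) (inv : G -> G).

Inductive gen (X : G -> Prop) : G -> Prop :=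
  | gen_in : forall x, X x -> gen X x
  | gen_one : gen X e
  | gen_mul : forall x y, gen X x -> gen X y -> gen X (mul x y)
  | gen_inv : forall x, gen X x -> gen X (inv x).

Definition comm (x y : G) : G := mul (mul (mul (inv x) (inv y)) x) y.

Definition derived (S : G -> Prop) : G -> Prop :=
  gen (fun z => exists x y, S x /\ S y /\ z = comm x y).

Definition derived1 : G -> Prop := derived (fun _ => True).
Definition derived2 : G -> Prop := derived derived1.

Definition metabelian : Prop := forall z, derived2 z -> z = e.

Definition hom_to_Z (phi : G -> Z) : Prop :=
  forall x y, phi (mul x y) = phi x + phi y.

Definition conjugate (x y : G) : Prop :=
  exists g, y = mul (mul (inv g) x) g.

End GroupDefs.

(* Main.v *)
Require Import Defs.
From Stdlib Require Import ZArith Lia.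
Open Scope Z_scope.

Section Proof.
Variables (G : Type) (mul : G -> G -> G) (e : G) (inv : G -> G).
Hypothesis HG : is_group mul e inv.
Hypothesis Hmeta : metabelian mul e inv.
Variable phi : G -> Z.
Hypothesis Hphi : hom_to_Z mul phi.
Hypothesis Hker : forall g : G, phi g = 0 <-> derived1 mul e inv g.
Variable a : G.
Hypothesis Ha : phi a = 1 \/ phi a = -1.

Let assoc := grp_assoc HG.
Let m1g := grp_mul1g HG.
Let mg1 := grp_mulg1 HG.
Let mVg := grp_mulVg HG.
Let mgV := grp_mulgV HG.

Lemma cK1 x y : mul (inv x) (mul x y) = y.
Proof. rewrite assoc, mVg, m1g; reflexivity. Qed.
Lemma cK2 x y : mul x (mul (inv x) y) = y.
Proof. rewrite assoc, mgV, m1g; reflexivity. Qed.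
Lemma inv_uniq x y : mul x y = e -> inv x = y.
Proof. intro H. rewrite <- (mg1 (inv x)), <- H, cK1. reflexivity. Qed.
Lemma invM x y : inv (mul x y) = mul (inv y) (inv x).
Proof. apply inv_uniq. rewrite <- assoc, cK2, mgV. reflexivity. Qed.
Lemma invK x : inv (inv x) = x.
Proof. apply inv_uniq. apply mVg. Qed.
Lemma inv1 : inv e = e.
Proof. apply inv_uniq. apply m1g. Qed.

Ltac gs := repeat (repeat rewrite <- assoc; rewrite ?cK1, ?cK2, ?mVg, ?mgV, ?mg1, ?m1g, ?invM, ?invK, ?inv1); repeat rewrite <- assoc.

Lemma phi1 : phi e = 0.
Proof. pose proof (Hphi e e) as H. rewrite m1g in H. lia. Qed.
Lemma phiV x : phi (inv x) = - phi x.
Proof. pose proof (Hphi (inv x) x) as H. rewrite mVg, phi1 in H. lia. Qed.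

Definition M x := phi x = 0.

Lemma M_comm x y : M x -> M y -> mul x y = mul y x.
Proof.
  intros Hx Hy.
  assert (H : comm mul inv x y = e).
  { apply Hmeta. apply gen_in. exists x, y. repeat split; apply Hker; assumption. }
  transitivity (mul (mul y x) (comm mul inv x y)).
  unfold comm; gs; reflexivity. rewrite H, mg1; reflexivity.
Qed.

Definition S z := exists d, M d /\ z = comm mul inv a d.

Lemma S1 : S e.
Proof. exists e. split. apply phi1. unfold comm. gs. reflexivity. Qed.

Lemma conjM g d : M d -> M (mul (inv g) (mul d g)).
Proof. unfold M; intro. rewrite !Hphi, phiV. lia. Qed.

Definition al d := mul (inv a) (mul d a).
Definition cj g x := mul (inv g) (mul x g).
Lemma commE d : comm mul inv a d = mul (al (inv d)) d.
Proof. unfold comm, al. gs. reflexivity. Qed.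
Lemma alM d d' : al (mul d d') = mul (al d) (al d').
Proof. unfold al. gs. reflexivity. Qed.
Lemma alMM d : M d -> M (al d).
Proof. apply conjM. Qed.
Lemma MV d : M d -> M (inv d).
Proof. unfold M; rewrite phiV; lia. Qed.
Lemma MMul d d' : M d -> M d' -> M (mul d d').
Proof. unfold M; rewrite Hphi; lia. Qed.

Lemma SV z : S z -> S (inv z).
Proof.
  intros [d [Hd ->]]. exists (inv d). split. apply MV; exact Hd.
  rewrite !commE, invM, invK.
  replace (inv (al (inv d))) with (al d) by (unfold al; gs; reflexivity).
  apply M_comm. apply MV; exact Hd. apply alMM; exact Hd.
Qed.

Lemma SM z w : S z -> S w -> S (mul z w).
Proof.
  intros [d [Hd ->]] [d' [Hd' ->]]. exists (mul d d'). split.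
  apply MMul; assumption.
  rewrite !commE, invM, alM.
  rewrite <- !assoc.
  rewrite (assoc d), (M_comm d (al (inv d'))) by (auto using alMM, MV).
  rewrite <- assoc.
  rewrite (assoc (al (inv d))), (M_comm (al (inv d)) (al (inv d'))) by (auto using alMM, MV).
  rewrite <- assoc. reflexivity.
Qed.

Lemma cjM x y m : cj (mul x y) m = cj y (cj x m).
Proof. unfold cj. gs. reflexivity. Qed.
Lemma cj_triv c m : M c -> M m -> cj c m = m.
Proof. intros Hc Hm. unfold cj. rewrite (M_comm m c) by assumption. gs. reflexivity. Qed.
Lemma cjMul g x y : cj g (mul x y) = mul (cj g x) (cj g y).
Proof. unfold cj. gs. reflexivity. Qed.

Lemma cj_al g m : M m -> cj g (al m) = al (cj g m).
Proof.
  intro Hm.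
  assert (E : mul g a = mul (mul a g) (mul (inv (mul a g)) (mul g a))) by (gs; reflexivity).
  transitivity (cj (mul a g) m). unfold cj, al. gs. reflexivity.
  transitivity (cj (mul g a) m).
  rewrite E at 1. rewrite (cjM (mul a g)), (cj_triv (mul (inv (mul a g)) (mul g a)) (cj (mul a g) m)). reflexivity.
  unfold M. rewrite !Hphi, phiV, !Hphi. lia.
  apply conjM. exact Hm.
  unfold cj, al. gs. reflexivity.
Qed.

Lemma Snormal g z : S z -> S (cj g z).
Proof.
  intros [d [Hd ->]]. exists (cj g d). split. apply conjM; exact Hd.
  rewrite !commE, cjMul, cj_al. f_equal. f_equal. unfold cj. gs. reflexivity.
  apply MV; exact Hd.
Qed.

Lemma Snormal' z : S (cj a z) -> S z.
Proof.
  intro H. apply (Snormal (inv a)) in H. rewrite <- cjM in H.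
  unfold cj in H. rewrite mgV in H. rewrite inv1, m1g, mg1 in H. exact H.
Qed.

Lemma ind (P : G -> Prop) : (forall x, M x -> P x) -> (forall x, P x <-> P (mul x a)) -> forall x, P x.
Proof.
  intros H0 Hs.
  assert (K : forall n, forall x, phi x = n -> P x).
  { apply (Z.peano_ind (fun n => forall x, phi x = n -> P x)).
    - exact H0.
    - intros n IH x Hx. destruct Ha as [A|A].
      + assert (P (mul x (inv a))) by (apply IH; rewrite Hphi, phiV; lia).
        apply Hs in H. rewrite <- assoc, mVg, mg1 in H. exact H.
      + apply Hs. apply IH. rewrite Hphi; lia.
    - intros n IH x Hx. destruct Ha as [A|A].
      + apply Hs. apply IH. rewrite Hphi; lia.
      + assert (P (mul x (inv a))) by (apply IH; rewrite Hphi, phiV; lia).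
        apply Hs in H. rewrite <- assoc, mVg, mg1 in H. exact H. }
  intro x. apply (K (phi x)). reflexivity.
Qed.

Lemma comm_ya x y : comm mul inv x (mul y a) = mul (comm mul inv x a) (cj a (comm mul inv x y)).
Proof. unfold comm, cj. gs. reflexivity. Qed.
Lemma comm_sym x y : comm mul inv y x = inv (comm mul inv x y).
Proof. unfold comm. gs. reflexivity. Qed.

Lemma step x y : S (comm mul inv x a) -> (S (comm mul inv x y) <-> S (comm mul inv x (mul y a))).
Proof.
  intro Hx. rewrite comm_ya. split.
  - intro H. apply SM. exact Hx. apply Snormal. exact H.
  - intro H. apply Snormal'.
    replace (cj a (comm mul inv x y)) with
      (mul (inv (comm mul inv x a)) (mul (comm mul inv x a) (cj a (comm mul inv x y)))) by (gs; reflexivity).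
    apply SM. apply SV. exact Hx. exact H.
Qed.

Lemma commMM d d' : M d -> M d' -> comm mul inv d d' = e.
Proof. intros. unfold comm. gs. rewrite (M_comm d d') by assumption. gs. reflexivity. Qed.

Lemma S_1 d : M d -> forall y, S (comm mul inv d y).
Proof.
  intro Hd. apply ind.
  - intros d' Hd'. rewrite commMM by assumption. apply S1.
  - intro y. apply step. rewrite comm_sym. apply SV. exists d. split. exact Hd. reflexivity.
Qed.

Lemma S_2 x : S (comm mul inv a x).
Proof.
  revert x. apply ind.
  - intros d Hd. exists d. split. exact Hd. reflexivity.
  - intro y. apply step. replace (comm mul inv a a) with e by (unfold comm; gs; reflexivity). apply S1.
Qed.

Lemma S_3 x y : S (comm mul inv x y).
Proof.
  revert y. apply ind.
  - intros d Hd. rewrite comm_sym. apply SV. apply S_1. exact Hd.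
  - intro y. apply step. rewrite comm_sym. apply SV. apply S_2.
Qed.

Lemma der_S z : derived1 mul e inv z -> S z.
Proof.
  induction 1.
  - destruct H as [x' [y' [_ [_ ->]]]]. apply S_3.
  - apply S1.
  - apply SM; assumption.
  - apply SV; assumption.
Qed.

End Proof.

Theorem lemma3p3 (G : Type) (mul : G -> G -> G) (e : G) (inv : G -> G)
  (HG : is_group mul e inv)
  (Hmeta : metabelian mul e inv)
  (phi : G -> Z)
  (Hphi : hom_to_Z mul phi)
  (Hsurj : forall n : Z, exists g : G, phi g = n)
  (Hker : forall g : G, phi g = 0 <-> derived1 mul e inv g)
  (a b : G)
  (Hgen : phi a = 1 \/ phi a = -1)
  (Hab : phi a = phi b) :
  conjugate mul inv a b.
Proof.
  assert (Hc : derived1 mul e inv (mul (inv a) b)).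
  { apply Hker. rewrite Hphi, (phiV _ _ _ _ HG _ Hphi). lia. }
  destruct (der_S _ _ _ _ HG Hmeta _ Hphi Hker a Hgen _ Hc) as [d [Hd E]].
  exists d.
  assert (b = mul a (mul (inv a) b)) as ->.
  { rewrite (cK2 _ _ _ _ HG). reflexivity. }
  rewrite E. unfold comm. rewrite !(grp_assoc HG), (grp_mulgV HG), (grp_mul1g HG). reflexivity.
Qed.
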